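(* Let $\alpha,\beta\in(0,1)$, $m=\alpha n^\beta$, $c\ge2$, and $\lambda^*=1/(1-\beta)$. Then for all $\lambda<\lambda^*$ there exists $N>0$ such that for all $n>N$, $\frac{\lambda m}{\log_2 n}\le w^*(n,2^{m+c})$.
   Context: For $q\ge1$, $w^*(n,q)=\max\{w\ge0:\sum_{j=1}^w\binom{n}{j}\le q-1\}$. *)

(* Defs.v *)
From Stdlib Require Import Reals List.
Open Scope R_scope.

Definition binsum (n w : nat) : R :=
  fold_right Rplus 0 (map (fun j => Binomial.C n j) (seq 1 w)).

Fixpoint wmax (n : nat) (q : R) (k : nat) : nat :=
  match k with
  | O => O
  | S k' => if Rle_dec (binsum n (S k')) (q - 1) then S k' else wmax n q k'
  end.

(* w*(n,q) = max{ w >= 0 : sum_{j=1}^w C(n,j) <= q - 1 }.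
   Since C(n,j) = 0 for j > n, the maximum may be taken over w <= n
   (it coincides with the paper's max whenever that max exists, i.e. q < 2^n). *)
Definition wstar (n : nat) (q : R) : nat := wmax n q n.

Definition log2 (x : R) : R := ln x / ln 2.

(* Main.v *)
Require Import Defs.
From Stdlib Require Import Reals Lra Lia List ZArith.
Open Scope R_scope.

Lemma fold_shift (l : list R) (a : R) : fold_right Rplus a l = fold_right Rplus 0 l + a.
Proof. induction l; simpl; lra. Qed.

Lemma binsum_S n k : binsum n (S k) = binsum n k + Binomial.C n (S k).
Proof.
  unfold binsum. rewrite seq_S, map_app, fold_right_app. simpl.
  rewrite fold_shift. lra.
Qed.

Lemma wmax_ge n q K k : (k <= K)%nat -> binsum n k <= q - 1 -> (k <= wmax n q K)%nat.
Proof.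
  induction K; intros Hk Hb; simpl.
  - lia.
  - destruct (Rle_dec (binsum n (S K)) (q - 1)) as [H|H].
    + lia.
    + destruct (Nat.eq_dec k (S K)) as [->|Hne]; [contradiction|].
      apply IHK; [lia|exact Hb].
Qed.

Lemma fact_le n j : (j <= n)%nat ->
  INR (Factorial.fact n) <= INR n ^ j * INR (Factorial.fact (n - j)).
Proof.
  induction j; intros Hj.
  - simpl. rewrite Nat.sub_0_r. lra.
  - assert (IH := IHj ltac:(lia)).
    replace (n - j)%nat with (S (n - S j)) in IH by lia.
    change (Factorial.fact (S (n - S j))) with (S (n - S j) * Factorial.fact (n - S j))%nat in IH.
    rewrite mult_INR in IH.
    assert (H1 : INR (S (n - S j)) <= INR n) by (apply le_INR; lia).
    assert (H2 := INR_fact_lt_0 (n - S j)).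
    assert (H3 : 0 <= INR n ^ j) by (apply pow_le; apply pos_INR).
    assert (H4 : INR n ^ j * (INR (S (n - S j)) * INR (Factorial.fact (n - S j))) <= INR n ^ j * (INR n * INR (Factorial.fact (n - S j)))).
    { apply Rmult_le_compat_l; [lra|]. apply Rmult_le_compat_r; lra. }
    simpl. lra.
Qed.

Lemma C_le n j : (j <= n)%nat -> Binomial.C n j <= INR n ^ j / INR (Factorial.fact j).
Proof.
  intros Hj. unfold Binomial.C, Rdiv. rewrite Rinv_mult.
  assert (H := fact_le n j Hj).
  assert (Fj := INR_fact_lt_0 j). assert (Fn := INR_fact_lt_0 (n-j)).
  assert (H2 : INR (Factorial.fact n) * / INR (Factorial.fact (n - j)) <= INR n ^ j).
  { apply Rmult_le_reg_r with (INR (Factorial.fact (n - j))); [lra|].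
    rewrite Rmult_assoc, Rinv_l by lra. lra. }
  assert (0 < / INR (Factorial.fact j)) by (apply Rinv_0_lt_compat; lra).
  replace (INR (Factorial.fact n) * (/ INR (Factorial.fact j) * / INR (Factorial.fact (n - j))))
    with (INR (Factorial.fact n) * / INR (Factorial.fact (n - j)) * / INR (Factorial.fact j)) by ring.
  apply Rmult_le_compat_r; lra.
Qed.

Definition T (n k : nat) : R := INR n ^ k / INR (Factorial.fact k).

Lemma T_step n k : (S k <= n)%nat -> T n k <= T n (S k).
Proof.
  intros H. unfold T.
  change (Factorial.fact (S k)) with (S k * Factorial.fact k)%nat.
  rewrite mult_INR, <- tech_pow_Rmult.
  assert (Fk := INR_fact_lt_0 k).
  assert (H1 : INR (S k) <= INR n) by (apply le_INR; lia).
  assert (H0 : 0 < INR (S k)) by (apply lt_0_INR; lia).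
  replace (INR n * INR n ^ k / (INR (S k) * INR (Factorial.fact k)))
    with (INR n ^ k / INR (Factorial.fact k) * (INR n / INR (S k))) by (field; lra).
  assert (0 <= INR n ^ k / INR (Factorial.fact k)).
  { unfold Rdiv. apply Rmult_le_pos; [apply pow_le, pos_INR|left; apply Rinv_0_lt_compat; lra]. }
  assert (1 <= INR n / INR (S k)).
  { apply Rmult_le_reg_r with (INR (S k)); [lra|]. unfold Rdiv.
    rewrite Rmult_assoc, Rinv_l by lra. lra. }
  nra.
Qed.

Lemma T_mono n k : (k <= n)%nat -> forall j, (j <= k)%nat -> T n j <= T n k.
Proof.
  induction k; intros Hk j Hj.
  - replace j with 0%nat by lia. lra.
  - destruct (Nat.eq_dec j (S k)) as [->|]; [lra|].
    eapply Rle_trans; [apply IHk; lia|]. apply T_step; lia.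
Qed.

Lemma binsum_bound n k : (k <= n)%nat -> binsum n k <= INR k * T n k.
Proof.
  induction k; intros Hk.
  - unfold binsum. simpl. lra.
  - rewrite binsum_S. assert (IH := IHk ltac:(lia)).
    assert (H1 := C_le n (S k) Hk).
    assert (H2 := T_mono n (S k) Hk k ltac:(lia)).
    assert (0 <= INR k) by apply pos_INR.
    fold (T n (S k)) in H1. rewrite S_INR. nra.
Qed.

Lemma exp_pow_nat a k : exp a ^ k = exp (INR k * a).
Proof.
  induction k.
  - simpl. rewrite Rmult_0_l, exp_0. reflexivity.
  - rewrite S_INR. simpl. rewrite IHk, <- exp_plus. f_equal. ring.
Qed.

Lemma succ_pow k : (INR k + 1) ^ k <= 3 * INR k ^ k.
Proof.
  destruct k as [|k].
  - simpl. lra.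
  - set (x := INR (S k)).
    assert (Hx : 0 < x) by (apply lt_0_INR; lia).
    replace (x + 1) with (x * (1 + / x)) by (field; lra).
    rewrite Rpow_mult_distr.
    assert (H1 : (1 + / x) ^ S k <= exp (/ x) ^ S k).
    { apply pow_incr. split; [assert (0 < / x) by (apply Rinv_0_lt_compat; lra); lra|].
      apply exp_ineq1_le. }
    rewrite exp_pow_nat in H1. fold x in H1.
    replace (x * / x) with 1 in H1 by (field; lra).
    assert (H3 := exp_le_3).
    assert (0 <= x ^ S k) by (apply pow_le; lra).
    nra.
Qed.

Lemma fact3 k : INR k ^ k <= 3 ^ k * INR (Factorial.fact k).
Proof.
  induction k.
  - simpl. lra.
  - change (Factorial.fact (S k)) with (S k * Factorial.fact k)%nat.
    rewrite mult_INR, S_INR. simpl.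
    assert (H := succ_pow k).
    assert (0 <= INR k) by apply pos_INR.
    nra.
Qed.

Lemma k_le_2pow k : INR k <= 2 ^ k.
Proof.
  induction k.
  - simpl; lra.
  - rewrite S_INR. simpl. assert (1 <= 2 ^ k) by (apply pow_R1_Rle; lra). lra.
Qed.

Lemma binsum_final n k : (1 <= k)%nat -> (k <= n)%nat ->
  binsum n k <= (6 * INR n / INR k) ^ k.
Proof.
  intros H1 H2.
  eapply Rle_trans; [apply binsum_bound; exact H2|]. unfold T.
  assert (Hk : 0 < INR k) by (apply lt_0_INR; lia).
  assert (F := INR_fact_lt_0 k). assert (H3 := fact3 k). assert (H4 := k_le_2pow k).
  assert (Q : 0 < INR k ^ k) by (apply pow_lt; lra).
  assert (P : 0 <= INR n ^ k) by (apply pow_le, pos_INR).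
  unfold Rdiv. rewrite !Rpow_mult_distr, pow_inv.
  replace (6 ^ k) with (2 ^ k * 3 ^ k) by (rewrite <- Rpow_mult_distr; f_equal; ring).
  assert (iF : / INR (Factorial.fact k) <= 3 ^ k * / INR k ^ k).
  { apply Rmult_le_reg_r with (INR (Factorial.fact k) * INR k ^ k).
    - nra.
    - replace (/ INR (Factorial.fact k) * (INR (Factorial.fact k) * INR k ^ k)) with (INR k ^ k) by (field; lra).
      replace (3 ^ k * / INR k ^ k * (INR (Factorial.fact k) * INR k ^ k)) with (3 ^ k * INR (Factorial.fact k)) by (field; lra).
      lra. }
  assert (0 < / INR (Factorial.fact k)) by (apply Rinv_0_lt_compat; lra).
  assert (0 < / INR k ^ k) by (apply Rinv_0_lt_compat; lra).
  assert (0 <= 3 ^ k) by (apply pow_le; lra).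
  assert (A1 : INR k * (INR n ^ k * / INR (Factorial.fact k)) <= INR k * (INR n ^ k * (3 ^ k * / INR k ^ k))).
  { apply Rmult_le_compat_l; [lra|]. apply Rmult_le_compat_l; lra. }
  assert (0 <= INR n ^ k * (3 ^ k * / INR k ^ k)) by (apply Rmult_le_pos; [lra|apply Rmult_le_pos; lra]).
  nra.
Qed.

Lemma quad (a b e : R) : 0 < e -> exists Y, forall s, Y <= s -> a*s + b <= e*(s*s).
Proof.
  intros He. exists (1 + (Rabs a + Rabs b)/e). intros s Hs.
  assert (Ha := Rle_abs a). assert (Hb := Rle_abs b).
  assert (Ha0 := Rabs_pos a). assert (Hb0 := Rabs_pos b).
  assert (0 <= (Rabs a + Rabs b)/e) by (unfold Rdiv; apply Rmult_le_pos; [lra|left; apply Rinv_0_lt_compat; lra]).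
  assert (Hs1 : 1 <= s) by lra.
  assert (Hs2 : Rabs a + Rabs b <= e * s).
  { assert (e * ((Rabs a + Rabs b)/e) = Rabs a + Rabs b) by (field; lra). nra. }
  nra.
Qed.

Lemma expsq u : 0 <= u -> u*u/4 <= exp u.
Proof.
  intros Hu. replace u with (u/2 + u/2) at 3 by field. rewrite exp_plus.
  assert (H := exp_ineq1_le (u/2)). nra.
Qed.

Lemma ln_le_self L : 0 < L -> ln L <= L.
Proof. intros H. assert (H1 := exp_ineq1_le (ln L)). rewrite exp_ln in H1 by lra. lra. Qed.

Lemma ln_mono x y : 0 < x -> x <= y -> ln x <= ln y.
Proof. intros H1 H2. destruct H2 as [H2|<-]; [left; apply ln_increasing; lra|lra]. Qed.

Lemma core (A B be de L t x : R) :
  0 < be < 1 -> 0 < A -> 0 < de -> B = ln 6 - ln A -> 1 <= L ->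
  x = exp L -> t = exp (be * L) ->
  A * (ln L + B) <= (de/2) * L ->
  2 * L + Rabs B <= (de/2) * t ->
  (A * t / L + 1) * ln (6 * x / (A * t / L)) <= (A * (1 - be) + de) * t.
Proof.
  intros Hb HA Hd HB HL Hx Ht H2 H3.
  assert (Htp : 0 < t) by (rewrite Ht; apply exp_pos).
  assert (Hxp : 0 < x) by (rewrite Hx; apply exp_pos).
  set (K := A * t / L).
  assert (HK : K * L = A * t) by (unfold K; field; lra).
  assert (HKp : 0 < K) by (unfold K; unfold Rdiv; apply Rmult_lt_0_compat; [nra|apply Rinv_0_lt_compat; lra]).
  replace (6 * x / K) with (6 * x * L * / A * / t) by (unfold K; field; repeat split; lra).
  assert (0 < / A) by (apply Rinv_0_lt_compat; lra).
  assert (0 < / t) by (apply Rinv_0_lt_compat; lra).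
  rewrite !ln_mult by (repeat apply Rmult_lt_0_compat; lra).
  rewrite !ln_Rinv by lra.
  assert (Lx : ln x = L) by (rewrite Hx; apply ln_exp).
  assert (Lt : ln t = be * L) by (rewrite Ht; apply ln_exp).
  rewrite Lx, Lt.
  assert (Hl := ln_le_self L ltac:(lra)).
  assert (HBa := Rle_abs B).
  set (D := ln 6 + L + ln L + - ln A + - (be * L)).
  assert (HD : D = (1 - be) * L + (ln L + B)) by (unfold D; rewrite HB; ring).
  assert (HD2 : D <= (de/2) * t) by nra.
  assert (HK2 : K * (ln L + B) <= (de/2) * t).
  { apply Rmult_le_reg_r with A; [lra|].
    replace (K * (ln L + B) * A) with (K * (A * (ln L + B))) by ring.
    assert (K * (A * (ln L + B)) <= K * ((de/2) * L)) by (apply Rmult_le_compat_l; lra).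
    nra. }
  replace ((K + 1) * D) with (K * L * (1 - be) + K * (ln L + B) + D) by (rewrite HD; ring).
  rewrite HK. nra.
Qed.

Theorem corollary2 (alpha beta c : R) :
  0 < alpha < 1 -> 0 < beta < 1 -> 2 <= c ->
  forall lambda : R, lambda < 1 / (1 - beta) ->
  exists N : R, 0 < N /\
    forall n : nat, N < INR n ->
      let m := alpha * Rpower (INR n) beta in
      lambda * m / log2 (INR n) <= INR (wstar n (Rpower 2 (m + c))).
Proof.
  intros Ha Hb Hc lambda Hl.
  assert (Hln2 : 0 < ln 2) by (rewrite <- ln_1; apply ln_increasing; lra).
  destruct (Rle_lt_dec lambda 0) as [Hl0|Hl0].
  - exists 1. split; [lra|]. intros n Hn m.
    assert (HL : 0 < ln (INR n)) by (rewrite <- ln_1; apply ln_increasing; lra).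
    assert (Hm : 0 < m) by (unfold m, Rpower; apply Rmult_lt_0_compat; [lra|apply exp_pos]).
    assert (H2 : 0 < log2 (INR n)) by (unfold log2, Rdiv; apply Rmult_lt_0_compat; [lra|apply Rinv_0_lt_compat; lra]).
    assert (0 <= INR (wstar n (Rpower 2 (m + c)))) by apply pos_INR.
    assert (0 < / log2 (INR n)) by (apply Rinv_0_lt_compat; lra).
    unfold Rdiv. assert (lambda * m <= 0) by nra. nra.
  - set (A := lambda * alpha * ln 2).
    assert (HA : 0 < A) by (unfold A; repeat apply Rmult_lt_0_compat; lra).
    set (de := alpha * ln 2 - A * (1 - beta)).
    assert (Hlb : lambda * (1 - beta) < 1).
    { apply Rmult_lt_compat_r with (r := 1 - beta) in Hl; [|lra].
      replace (1 / (1 - beta) * (1 - beta)) with 1 in Hl by (field; lra). lra. }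
    assert (Hde : 0 < de).
    { unfold de, A. replace (alpha * ln 2 - lambda * alpha * ln 2 * (1 - beta))
        with (alpha * ln 2 * (1 - lambda * (1 - beta))) by ring.
      apply Rmult_lt_0_compat; [apply Rmult_lt_0_compat|]; lra. }
    set (B := ln 6 - ln A).
    destruct (quad A (A * B) (de/8) ltac:(lra)) as [U0 HU0].
    destruct (quad 2 (Rabs B) (de * beta * beta / 8)) as [Y3 HY3].
    { assert (0 < beta * beta) by nra. nra. }
    set (Lmin := Rmax 1 (Rmax (exp (Rmax U0 0)) (Rmax (Rmax Y3 0) ((A+1)/(1-beta))))).
    exists (exp Lmin). split; [apply exp_pos|]. intros n Hn m.
    set (x := INR n) in *.
    assert (Hx : 0 < x) by (assert (H := exp_pos Lmin); lra).
    set (L := ln x).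
    assert (HLm : Lmin < L) by (unfold L; rewrite <- (ln_exp Lmin); apply ln_increasing; [apply exp_pos|lra]).
    assert (HL1 : 1 <= L) by (assert (H := Rmax_l 1 (Rmax (exp (Rmax U0 0)) (Rmax (Rmax Y3 0) ((A+1)/(1-beta))))); fold Lmin in H; lra).
    assert (Hr := Rmax_r 1 (Rmax (exp (Rmax U0 0)) (Rmax (Rmax Y3 0) ((A+1)/(1-beta))))). fold Lmin in Hr.
    assert (HLe : exp (Rmax U0 0) <= L) by (assert (H := Rmax_l (exp (Rmax U0 0)) (Rmax (Rmax Y3 0) ((A+1)/(1-beta)))); lra).
    assert (Hr2 := Rmax_r (exp (Rmax U0 0)) (Rmax (Rmax Y3 0) ((A+1)/(1-beta)))).
    assert (HLY : Rmax Y3 0 <= L) by (assert (H := Rmax_l (Rmax Y3 0) ((A+1)/(1-beta))); lra).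
    assert (HLA : (A+1)/(1-beta) <= L) by (assert (H := Rmax_r (Rmax Y3 0) ((A+1)/(1-beta))); lra).
    set (t := exp (beta * L)).
    assert (Hxe : x = exp L) by (unfold L; rewrite exp_ln; lra).
    assert (Hmt : m = alpha * t) by reflexivity.
    assert (C2 : A * (ln L + B) <= (de/2) * L).
    { set (u := ln L).
      assert (Hu : Rmax U0 0 <= u) by (unfold u; rewrite <- (ln_exp (Rmax U0 0)); apply ln_mono; [apply exp_pos|lra]).
      assert (Hu0 := Rmax_l U0 0). assert (Hu1 := Rmax_r U0 0).
      assert (H1 := HU0 u ltac:(lra)).
      assert (H2 := expsq u ltac:(lra)).
      assert (HuL : exp u = L) by (unfold u; apply exp_ln; lra).
      nra. }
    assert (C3 : 2 * L + Rabs B <= (de/2) * t).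
    { assert (Hy0 := Rmax_l Y3 0).
      assert (H1 := HY3 L ltac:(lra)).
      assert (H2 := expsq (beta * L) ltac:(nra)). fold t in H2.
      nra. }
    assert (Ht1 : 1 <= t) by (unfold t; assert (H := exp_ineq1_le (beta * L)); nra).
    set (E := exp ((1 - beta) * L)).
    assert (HxtE : x = t * E) by (rewrite Hxe; unfold t, E; rewrite <- exp_plus; f_equal; ring).
    assert (HE : A + 1 <= E).
    { unfold E. assert (H := exp_ineq1_le ((1 - beta) * L)).
      assert ((A + 1) <= (1 - beta) * L).
      { apply Rmult_le_compat_r with (r := 1 - beta) in HLA; [|lra].
        replace ((A + 1) / (1 - beta) * (1 - beta)) with (A + 1) in HLA by (field; lra). lra. }
      lra. }
    set (K := A * t / L).
    assert (HK : K * L = A * t) by (unfold K; field; lra).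
    assert (HKp : 0 < K) by (unfold K, Rdiv; apply Rmult_lt_0_compat; [nra|apply Rinv_0_lt_compat; lra]).
    assert (HKt : K <= A * t) by nra.
    assert (C5 : K + 1 <= x) by nra.
    destruct (archimed K) as [Hu1 Hu2].
    assert (Hz : (0 < up K)%Z) by (apply lt_0_IZR; lra).
    set (k := Z.to_nat (up K)).
    assert (Hk : INR k = IZR (up K)) by (unfold k; rewrite INR_IZR_INZ, Z2Nat.id; [reflexivity|lia]).
    assert (Hk1 : (1 <= k)%nat) by (unfold k; lia).
    assert (Hkn : (k <= n)%nat) by (apply INR_le; fold x; lra).
    assert (Hkp : 0 < INR k) by lra.
    assert (Hcore := core A B beta de L t x Hb HA Hde eq_refl HL1 Hxe eq_refl C2 C3).
    fold K in Hcore.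
    replace (A * (1 - beta) + de) with (alpha * ln 2) in Hcore by (unfold de; ring).
    assert (Hbs := binsum_final n k Hk1 Hkn). fold x in Hbs.
    assert (H6 : 0 < 6 * x / INR k) by (unfold Rdiv; apply Rmult_lt_0_compat; [lra|apply Rinv_0_lt_compat; lra]).
    rewrite <- (Rpower_pow k _ H6) in Hbs. unfold Rpower in Hbs.
    assert (Hlk : ln (6 * x / INR k) <= ln (6 * x / K)).
    { apply ln_mono; [lra|]. unfold Rdiv. apply Rmult_le_compat_l; [lra|].
      apply Rinv_le_contravar; lra. }
    assert (Hl0K : 0 <= ln (6 * x / K)).
    { rewrite <- ln_1. apply ln_mono; [lra|].
      apply Rmult_le_reg_r with K; [lra|]. unfold Rdiv. rewrite Rmult_assoc, Rinv_l by lra. lra. }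
    assert (Hexp : INR k * ln (6 * x / INR k) <= alpha * ln 2 * t).
    { assert (INR k * ln (6 * x / INR k) <= INR k * ln (6 * x / K)) by (apply Rmult_le_compat_l; lra).
      assert (INR k * ln (6 * x / K) <= (K + 1) * ln (6 * x / K)) by (apply Rmult_le_compat_r; lra).
      lra. }
    assert (Hbs2 : binsum n k <= exp (alpha * ln 2 * t)).
    { eapply Rle_trans; [exact Hbs|]. destruct Hexp as [Hexp|Hexp]; [left; apply exp_increasing; exact Hexp|rewrite Hexp; lra]. }
    assert (Hq : binsum n k <= Rpower 2 (m + c) - 1).
    { unfold Rpower. replace ((m + c) * ln 2) with (alpha * ln 2 * t + c * ln 2) by (rewrite Hmt; ring).
      rewrite exp_plus.
      assert (H1 : 1 <= exp (alpha * ln 2 * t)).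
      { assert (H := exp_ineq1_le (alpha * ln 2 * t)). assert (0 <= alpha * ln 2 * t) by (repeat apply Rmult_le_pos; lra). lra. }
      assert (H2 : 2 <= exp (c * ln 2)).
      { rewrite <- (exp_ln 2) at 1 by lra.
        assert (Hc2 : ln 2 <= c * ln 2) by nra.
        destruct Hc2 as [H|H]; [left; apply exp_increasing; exact H|rewrite <- H; lra]. }
      nra. }
    assert (Hw := wmax_ge n (Rpower 2 (m + c)) n k Hkn Hq).
    apply le_INR in Hw. unfold wstar.
    replace (lambda * m / log2 x) with K.
    + lra.
    + unfold K, log2, A. rewrite Hmt. fold L. field. split; lra.
Qed.
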